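(* For $n\in\{0,1,\dots\}$ and $b,s\in\{0,\dots,n\}$, the diagonal matrix $\Gamma_{n,b,s}$ satisfies $$\Gamma_{n,b,s}=\mathrm{diag}(\lambda_{n,a_1,s},\dots,\lambda_{n,a_{2^b},s}).$$ In particular, for $b\ge1$, with $\mathbf{0}_{2^{b-1}}$ the zero vector of length $2^{b-1}$, $$\Gamma_{n,b,s}=\mathrm{diag}(\lambda_{n,a_1,s},\dots,\lambda_{n,a_{2^{b-1}},s},\mathbf{0}_{2^{b-1}})+\mathrm{diag}(\mathbf{0}_{2^{b-1}},\lambda_{n,a_1+1,s},\dots,\lambda_{n,a_{2^{b-1}}+1,s}).$$
   Context: With $(n)_t=n(n-1)\cdots(n-t+1)$ (empty product $1$), $\lambda_{n,b,s}=\sum_{t=0}^b\binom bt(-2)^t\frac{(s)_t}{(n)_t}$. Let $\Gamma=\mathrm{diag}(1,-1)$ and $I_2$ the $2\times2$ identity. The $2^b\times2^b$ matrices $\Gamma_{n,b,s}$ are defined by $\Gamma_{n,0,s}=1$ and, for $b\in\{1,\dots,n\}$, $\Gamma_{n,b,s}=\frac sn(\Gamma\otimes\Gamma_{n-1,b-1,s-1})+(1-\frac sn)(I_2\otimes\Gamma_{n-1,b-1,s})$ (terms with coefficient zero are omitted). The vectors $\mathbf{a}_b$ of length $2^b$ are defined by $\mathbf{a}_1=(0,1)$ and $\mathbf{a}_b=(\mathbf{a}_{b-1},\mathbf{a}_{b-1}+\mathbf{1}_{b-1})$ for $b\ge2$, where $\mathbf{1}_{b-1}$ is the all-ones vector of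 length $2^{b-1}$ (e.g. $\mathbf{a}_2=(0,1,1,2)$, $\mathbf{a}_3=(0,1,1,2,1,2,2,3)$); $a_k$ denotes the $k$-th entry of $\mathbf{a}_b$ for any $b$ with $2^b\ge k$ (this is well defined), and $a_1=0$. *)

(* Defs.v *)
From HB Require Import structures.
From mathcomp Require Import all_boot all_order all_algebra.
Set Implicit Arguments. Unset Strict Implicit. Unset Printing Implicit Defensive.
Import Order.TTheory GRing.Theory Num.Theory.
Local Open Scope ring_scope.

Lemma expS2 (b : nat) : (2 ^ b + 2 ^ b = 2 ^ b.+1)%N.
Proof. by rewrite expnS mul2n addnn. Qed.

Definition lam (R : realFieldType) (n b s : nat) : R :=
  \sum_(t < b.+1) ('C(b, t))%:R * (-2) ^+ t * (s ^_ t)%:R / (n ^_ t)%:R.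

Definition kron2 (R : realFieldType) (m : nat) (A : 'M[R]_2) (B : 'M[R]_m)
  : 'M[R]_(m + m) :=
  block_mx (A 0 0 *: B) (A 0 1 *: B) (A 1 0 *: B) (A 1 1 *: B).

Definition Gam2 (R : realFieldType) : 'M[R]_2 := diag_mx (\row_(i < 2) (if i == 0 then 1 else -1)).

(* Gamma_{n,b,s}; the recursion multiplies the omitted zero-coefficient terms by 0,
   using truncated subtraction n-1, s-1 (harmless since their coefficient is 0). *)
Fixpoint Gam (R : realFieldType) (n b s : nat) : 'M[R]_(2 ^ b) :=
  match b with
  | 0 => 1%:M
  | b'.+1 => castmx (expS2 b', expS2 b')
      ((s%:R / n%:R) *: kron2 (Gam2 R) (Gam R n.-1 b' s.-1)
       + (1 - s%:R / n%:R) *: kron2 1%:M (Gam R n.-1 b' s))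
  end.

Fixpoint avec (b : nat) : 'rV[nat]_(2 ^ b) :=
  match b with
  | 0 => \row_(k < 1) 0%N
  | b'.+1 => castmx (erefl 1%N, expS2 b')
      (row_mx (avec b') (\row_(k < 2 ^ b') (avec b' 0 k).+1))
  end.

(* Main.v *)
Require Import Defs.
From HB Require Import structures.
From mathcomp Require Import all_boot all_order all_algebra.
From mathcomp Require Import ring.
Import Order.TTheory GRing.Theory Num.Theory.
Local Open Scope ring_scope.

Section S.
Variable R : realFieldType.
Definition ff (n s t : nat) : R := (s ^_ t)%:R / (n ^_ t)%:R.

Lemma ffA (m s t : nat) :
  s%:R / m.+1%:R * ff m s.-1 t = ff m.+1 s t.+1.
Proof.
rewrite /ff ffactSS; case: s => [|s] /=.
  by rewrite !mul0r.
idtac.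
by rewrite ffactSS !natrM invfM; ring.
Qed.

Lemma ffB (m s t : nat) : (t <= m)%N ->
  (1 - s%:R / m.+1%:R) * ff m s t = ff m.+1 s t - ff m.+1 s t.+1.
Proof.
move=> htm.
have hY : (m ^_ t)%:R = ((m.+1) ^_ t)%:R * (m.+1 - t)%:R / m.+1%:R :> R.
  rewrite -natrM -ffactnSr ffactSS natrM mulrC mulrA mulVf ?mul1r //.
  by rewrite pnatr_eq0.
have hP : ((m.+1) ^_ t)%:R != 0 :> R.
  by rewrite pnatr_eq0 -lt0n ffact_gt0; apply: leqW.
have hnt : (m.+1 - t)%:R != 0 :> R.
  by rewrite pnatr_eq0 subn_eq0 -ltnNge ltnS.
have hn : m.+1%:R != 0 :> R by rewrite pnatr_eq0.
rewrite /ff hY (ffactnSr m.+1 t) (ffactnSr s t).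
case: (ltnP s t) => hst.
  by rewrite ffact_small // !mul0r mulr0 subrr.
have hle : (t <= m.+1)%N by apply: leqW.
rewrite !natrM (natrB _ hst) (natrB _ hle).
rewrite (natrB _ hle) in hnt.
move: hP hnt hn; set P := (m.+1 ^_ t)%:R; set N := m.+1%:R; set X := (s ^_ t)%:R.
move=> hP hnt hn.
field.
move: hnt hn; rewrite /N -natr1 (addrC m%:R) => -> ->.
by rewrite hP.
Qed.

Lemma lamE (n a s : nat) :
  lam R n a s = \sum_(t < a.+1) 'C(a, t)%:R * (-2) ^+ t * ff n s t.
Proof. by apply: eq_bigr => t _; rewrite /ff !mulrA. Qed.

Lemma lamC (m a s : nat) : (a <= m)%N ->
  s%:R / m.+1%:R * lam R m a s.-1 + (1 - s%:R / m.+1%:R) * lam R m a s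
  = lam R m.+1 a s.
Proof.
move=> ham; rewrite !lamE !mulr_sumr -big_split /=.
apply: eq_bigr => t _.
have ht : (t <= m)%N by apply: leq_trans ham; rewrite -ltnS.
rewrite mulrCA (mulrCA _ _ (ff m s t)) -mulrDr ffA ffB //.
by congr (_ * _); ring.
Qed.

Lemma lamD (m a s : nat) : (a <= m)%N ->
  - (s%:R / m.+1%:R * lam R m a s.-1) + (1 - s%:R / m.+1%:R) * lam R m a s
  = lam R m.+1 a.+1 s.
Proof.
move=> ham; rewrite !lamE !mulr_sumr -sumrN -big_split /=.
set g := fun t : nat => (-2) ^+ t * ff m.+1 s t.
have -> : \sum_(i < a.+1)
   (- (s%:R / m.+1%:R * ('C(a, i)%:R * (-2) ^+ i * ff m s.-1 i)) +
    (1 - s%:R / m.+1%:R) * ('C(a, i)%:R * (-2) ^+ i * ff m s i))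
  = \sum_(i < a.+1) 'C(a, i)%:R * g i + \sum_(i < a.+1) 'C(a, i)%:R * g i.+1.
  rewrite -big_split /=; apply: eq_bigr => t _.
  have ht : (t <= m)%N by apply: leq_trans ham; rewrite -ltnS.
  rewrite /g -ffA.
  have := @ffB m s t ht; set u := ff m s t => hB.
  have -> : ff m.+1 s t = (1 - s%:R / m.+1%:R) * u + s%:R / m.+1%:R * ff m s.-1 t.
    by rewrite hB ffA; ring.
  rewrite exprS; ring.
rewrite (big_ord_recl a.+1) /= bin0.
have -> : \sum_(i < a.+1)
     'C(a.+1, bump 0 i)%:R * (-2) ^+ bump 0 i * ff m.+1 s (bump 0 i)
   = \sum_(i < a.+1) 'C(a, i)%:R * g i.+1 + \sum_(i < a.+1) 'C(a, i.+1)%:R * g i.+1.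
  rewrite -big_split /=; apply: eq_bigr => i _.
  by rewrite /bump /= add1n binS natrD /g; ring.
suff H : \sum_(i < a.+1) 'C(a, i)%:R * g i = 1 * (-2)^+0 * ff m.+1 s 0
   + \sum_(i < a.+1) 'C(a, i.+1)%:R * g i.+1 by rewrite H; ring.
rewrite [in RHS]big_ord_recr /= bin_small // mul0r addr0.
rewrite [in LHS](big_ord_recl a) /= bin0 /g; congr (_ + _).
by rewrite mulrA.
Qed.
End S.

Lemma castP (b : nat) (P : 'I_(2 ^ b.+1) -> Prop) :
  (forall u : 'I_(2 ^ b) + 'I_(2 ^ b), P (cast_ord (expS2 b) (unsplit u))) ->
  forall i, P i.
Proof.
move=> H i; rewrite -(cast_ordKV (expS2 b) i) -(splitK (cast_ord _ i)); apply: H.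
Qed.

Lemma avec_le (b : nat) (k : 'I_(2 ^ b)) : (avec b 0%R k <= b)%N.
Proof.
elim: b k => [|b IH] k; first by rewrite /= mxE.
move: k; apply: castP => u.
rewrite /= castmxE cast_ordK; case: u => k /=.
  by rewrite cast_ord_id row_mxEl; apply: leqW; apply: IH.
by rewrite cast_ord_id row_mxEr mxE ltnS; apply: IH.
Qed.

Section M.
Variable R : realFieldType.

Lemma diagZ n (c : R) (d : 'rV[R]_n) : c *: diag_mx d = diag_mx (c *: d).
Proof. by apply/matrixP => i j; rewrite !mxE; case: (i == j); rewrite ?mulr0 ?mulr1. Qed.

Lemma diagD n (d e : 'rV[R]_n) : diag_mx d + diag_mx e = diag_mx (d + e).
Proof. by apply/matrixP => i j; rewrite !mxE mulrnDl. Qed.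

Lemma castdiag m n (E : m = n) (d : 'rV[R]_m) :
  castmx (E, E) (diag_mx d) = diag_mx (castmx (erefl 1%N, E) d).
Proof. by case: n / E; rewrite !castmx_id. Qed.

Lemma rowlam b n s :
  castmx (erefl 1%N, expS2 b)
    (row_mx (\row_(k < 2 ^ b) lam R n (avec b 0 k) s)
            (\row_(k < 2 ^ b) lam R n (avec b 0 k).+1 s))
  = \row_(k < 2 ^ b.+1) lam R n (avec b.+1 0 k) s.
Proof.
apply/matrixP => i j; rewrite !ord1; move: j; apply: castP => u.
rewrite castmxE mxE /= castmxE !cast_ordK !cast_ord_id.
by case: u => k /=; rewrite ?row_mxEl ?row_mxEr !mxE.
Qed.

Lemma GamS b n s :
  Gam R n b s = diag_mx (\row_(k < 2 ^ b) lam R n (avec b 0 k) s) ->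
  Gam R n b s.-1 = diag_mx (\row_(k < 2 ^ b) lam R n (avec b 0 k) s.-1) ->
  (b <= n)%N ->
  Gam R n.+1 b.+1 s = castmx (expS2 b, expS2 b)
    (diag_mx (row_mx (\row_(k < 2 ^ b) lam R n.+1 (avec b 0 k) s)
                     (\row_(k < 2 ^ b) lam R n.+1 (avec b 0 k).+1 s))).
Proof.
move=> H1 H2 hb.
rewrite [Gam _ _ _ _]/= H1 H2; congr castmx.
have K : forall (a : 'M[R]_2) (d : 'rV[R]_(2 ^ b)), kron2 a (diag_mx d) =
   block_mx (diag_mx (a 0 0 *: d)) (a 0 1 *: diag_mx d)
            (a 1 0 *: diag_mx d) (diag_mx (a 1 1 *: d)).
  by move=> a d; rewrite /kron2 !diagZ.
rewrite !K.
have g00 : Gam2 R 0 0 = 1 by rewrite /Gam2 !mxE.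
have g01 : Gam2 R 0 1 = 0 by rewrite /Gam2 !mxE.
have g10 : Gam2 R 1 0 = 0 by rewrite /Gam2 !mxE.
have g11 : Gam2 R 1 1 = -1 by rewrite /Gam2 !mxE.
have i00 : (1%:M : 'M[R]_2) 0 0 = 1 by rewrite !mxE.
have i01 : (1%:M : 'M[R]_2) 0 1 = 0 by rewrite !mxE.
have i10 : (1%:M : 'M[R]_2) 1 0 = 0 by rewrite !mxE.
have i11 : (1%:M : 'M[R]_2) 1 1 = 1 by rewrite !mxE.
rewrite g00 g01 g10 g11 i00 i01 i10 i11 ?scale0r ?scaler0 !scale_block_mx ?scaler0 ?addr0
  !add_block_mx ?addr0 ?add0r !diagZ !diagD diag_mx_row.
have ha : forall j : 'I_(2 ^ b), (avec b 0%R j <= n)%N.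
  by move=> j; exact: leq_trans (@avec_le b j) hb.
congr block_mx; congr diag_mx; apply/matrixP => i j; rewrite !mxE !mul1r.
  by rewrite -lamC.
by rewrite -lamD // mulN1r mulrN.
Qed.

Lemma GamD (b : nat) : forall n s, (b <= n)%N ->
  Gam R n b s = diag_mx (\row_(k < 2 ^ b) lam R n (avec b 0 k) s).
Proof.
elim: b => [|b IH] n s hb.
  apply/matrixP => i j; rewrite !ord1 /= !mxE /lam big_ord1 /=.
  by rewrite bin0 expr0 ffactn0 !mul1r invr1.
case: n hb => [//|m] hb.
rewrite GamS ?IH // castdiag; congr diag_mx; exact: rowlam.
Qed.
End M.

Theorem lemma4p1 (R : realFieldType) (n b s : nat) :
  (b <= n)%N -> (s <= n)%N ->
  Gam R n b s = diag_mx (\row_(k < 2 ^ b) lam R n (avec b 0 k) s)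
  /\ (forall b' : nat, b = b'.+1 ->
      Gam R n b'.+1 s =
        castmx (expS2 b', expS2 b')
          (diag_mx (row_mx (\row_(k < 2 ^ b') lam R n (avec b' 0 k) s) 0)
           + diag_mx (row_mx 0 (\row_(k < 2 ^ b') lam R n (avec b' 0 k).+1 s)))).
Proof.
move=> hb hs; split; first exact: GamD.
move=> b' Eb; subst b.
case: n hb hs => [//|m] hb hs.
rewrite GamS ?GamD // diagD add_row_mx addr0 add0r.
by [].
Qed.
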